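(* Let $e=(e_0,\dots,e_n)$ be a system of weights, $n\ge1$. Let $\mathbb P^{2n+1}(e,e)=\operatorname{Proj}k[T_0,\dots,T_n,T'_0,\dots,T'_n]$ with $\deg T_i=\deg T'_i=e_i$, let $L_1=V_+(T_0,\dots,T_n)$, $L_2=V_+(T'_0,\dots,T'_n)$, and $U_n(e)=\mathbb P^{2n+1}(e,e)\setminus(L_1\cup L_2)$. Then the morphism $$\pi_n(e)\colon U_n(e)\to\mathbb P^n(e)\times\mathbb P^n(e),\quad [t_0,\dots,t_n,t'_0,\dots,t'_n]\mapsto([t_0,\dots,t_n],[t'_0,\dots,t'_n])$$ is open.
   Context: A system of weights is a tuple of positive integers; the weighted projective space $\mathbb P^n(e)=\operatorname{Proj}(k[T_0,\dots,T_n])$ with $\deg T_i=e_i$, over an algebraically closed field $k$; its points are classes $[a_0,\dots,a_n]\neq0$ with $[a_i]\sim[t^{e_i}a_i]$, $t\in k^*$. *)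

(* Defs.v *)
From HB Require Import structures.
From mathcomp Require Import all_boot all_order all_algebra.
From mathcomp Require Import mpoly.
Set Implicit Arguments. Unset Strict Implicit. Unset Printing Implicit Defensive.
Import GRing.Theory.
Local Open Scope ring_scope.

(* A point of P^n(e) is the class of a nonzero vector a : 'I_(n.+1) -> k
   under a ~ (t^{e_i} a_i), t in k^*.  Subsets of P^n(e) are encoded as
   saturated predicates on representatives. *)

Section WP.
Variable k : closedFieldType.

Definition wdeg (N : nat) (w : 'I_N -> nat) (m : 'X_{1..N}) : nat :=
  (\sum_(i < N) w i * m i)%N.

Definition whomog (N : nat) (w : 'I_N -> nat) (d : nat) (p : {mpoly k[N]}) : bool :=
  all (fun m => wdeg w m == d) (msupp p).

Definition wequiv (N : nat) (w : 'I_N -> nat) (a b : 'I_N -> k) : Prop :=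
  exists2 t : k, t != 0 & forall i, b i = t ^+ w i * a i.

(* the doubled weight system (e,e) on the 2n+2 variables T_0..T_n,T'_0..T'_n *)
Definition ww (n : nat) (e : 'I_n.+1 -> nat) (i : 'I_(n.+1 + n.+1)) : nat :=
  match split i with inl j => e j | inr j => e j end.

Definition fstc (n : nat) (x : 'I_(n.+1 + n.+1) -> k) : 'I_n.+1 -> k :=
  fun j => x (lshift n.+1 j).
Definition sndc (n : nat) (x : 'I_(n.+1 + n.+1) -> k) : 'I_n.+1 -> k :=
  fun j => x (rshift n.+1 j).
Definition catc (n : nat) (a b : 'I_n.+1 -> k) : 'I_(n.+1 + n.+1) -> k :=
  fun i => match split i with inl j => a j | inr j => b j end.

(* bihomogeneous of bidegree (d1,d2) w.r.t. weights e on each block;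
   these define the closed subsets of P^n(e) x P^n(e) *)
Definition bihomog (n : nat) (e : 'I_n.+1 -> nat) (d1 d2 : nat)
  (q : {mpoly k[n.+1 + n.+1]}) : bool :=
  all (fun m : 'X_{1..n.+1 + n.+1} => ((\sum_(j < n.+1) e j * m (lshift n.+1 j)) == d1)%N
             && ((\sum_(j < n.+1) e j * m (rshift n.+1 j)) == d2)%N) (msupp q).

Definition zeroset (N : nat) (F : {mpoly k[N]} -> Prop) (x : 'I_N -> k) : Prop :=
  forall p, F p -> meval x p = 0.

(* U_n(e) = P^{2n+1}(e,e) \ (L_1 u L_2), on representatives *)
Definition nonzero (N : nat) (a : 'I_N -> k) : Prop := exists i, a i != 0.
Definition inU (n : nat) (x : 'I_(n.+1 + n.+1) -> k) : Prop :=
  nonzero (fstc x) /\ nonzero (sndc x).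

End WP.

(* Main.v *)
Require Import Defs.
From HB Require Import structures.
From mathcomp Require Import all_boot all_order all_algebra.
From mathcomp Require Import mpoly.
From Stdlib Require Import Classical.
From mathcomp Require Import ring.
Import GRing.Theory.
Local Open Scope ring_scope.

Section H.
Context {k : closedFieldType}.
Context {n : nat}.
Variable e : 'I_n.+1 -> nat.
Local Notation N := (n.+1 + n.+1)%N.

Lemma splitL (j : 'I_n.+1) : split (lshift n.+1 j) = inl j.
Proof. exact: (unsplitK (inl j)). Qed.
Lemma splitR (j : 'I_n.+1) : split (rshift n.+1 j) = inr j.
Proof. exact: (unsplitK (inr j)). Qed.

Definition bd1 (m : 'X_{1..N}) := (\sum_(j < n.+1) e j * m (lshift n.+1 j))%N.
Definition bd2 (m : 'X_{1..N}) := (\sum_(j < n.+1) e j * m (rshift n.+1 j))%N.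

Definition sc (t s : k) (x : 'I_N -> k) : 'I_N -> k := fun i =>
  (match split i with inl j => t ^+ e j | inr j => s ^+ e j end) * x i.

Definition comp (p : {mpoly k[N]}) d1 d2 : {mpoly k[N]} :=
  \sum_(m <- msupp p | (bd1 m == d1) && (bd2 m == d2)) p@_m *: 'X_[m].

Definition mon (x : 'I_N -> k) (m : 'X_{1..N}) := \prod_(i < N) x i ^+ m i.

Lemma wdegE (m : 'X_{1..N}) : wdeg (ww e) m = (bd1 m + bd2 m)%N.
Proof. by rewrite /wdeg big_split_ord /ww; congr (_ + _)%N; apply: eq_bigr => j _; rewrite ?splitL ?splitR. Qed.

Lemma mon_sc t s x m : mon (sc t s x) m = t ^+ bd1 m * s ^+ bd2 m * mon x m.
Proof.
rewrite /mon /sc !big_split_ord /=.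
under eq_bigr do rewrite splitL exprMn -exprM.
under [in X in _ * X = _]eq_bigr do rewrite splitR exprMn -exprM.
rewrite !big_split /= -!prodrXr /bd1 /bd2.
rewrite (mulrC (\prod_(i < n.+1) t ^+ _)).
ring.
Qed.

Lemma meval_sc t s x p : meval (sc t s x) p =
  \sum_(m <- msupp p) t ^+ bd1 m * s ^+ bd2 m * (p@_m * mon x m).
Proof.
rewrite mevalE; apply: eq_bigr => m _.
by rewrite -[\prod_i _]/(mon _ m) mon_sc mulrCA.
Qed.

Lemma meval_comp x p d1 d2 : meval x (comp p d1 d2) =
  \sum_(m <- msupp p | (bd1 m == d1) && (bd2 m == d2)) p@_m * mon x m.
Proof.
rewrite /comp raddf_sum /=; apply: eq_bigr => m _.
by rewrite mevalZ mevalX.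
Qed.

Lemma comp_bihomog p d1 d2 : bihomog e d1 d2 (comp p d1 d2).
Proof.
apply/allP => m; rewrite mcoeff_msupp; apply: contraR => hm.
rewrite /comp raddf_sum /=; apply/eqP; apply: big1 => m' /andP[h1 h2].
rewrite mcoeffZ mcoeffX; case: eqP => [E|]; last by rewrite mulr0.
by move: hm; rewrite -E /bd1 /bd2 in h1 h2 *; rewrite (eqP h1) (eqP h2) !eqxx.
Qed.

Lemma group (T : eqType) (r : seq T) (b1 b2 : T -> nat) (c : T -> k) D t s :
  (forall m, m \in r -> (b1 m < D)%N /\ (b2 m < D)%N) ->
  \sum_(m <- r) t ^+ b1 m * s ^+ b2 m * c m =
  \sum_(i < D) \sum_(j < D) t ^+ i * s ^+ j *
      \sum_(m <- r | (b1 m == i) && (b2 m == j)) c m.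
Proof.
move=> hD.
rewrite pair_big /=.
under [RHS]eq_bigr => ij _.
  rewrite mulr_sumr big_mkcond /=.
  over.
rewrite exchange_big /= big_seq [RHS]big_seq; apply: eq_bigr => m hm.
have [h1 h2] := hD m hm.
rewrite -big_mkcond /= (big_pred1 (Ordinal h1, Ordinal h2)) //.
move=> [i j] /=; rewrite xpair_eqE /= -!val_eqE /= ![_ == b1 m]eq_sym ![_ == b2 m]eq_sym.
by [].
Qed.
End H.

Theorem mainTheorem8 (k : closedFieldType) (n : nat) (e : 'I_n.+1 -> nat) :
  (1 <= n)%N ->
  (forall i, (0 < e i)%N) ->
  forall F : {mpoly k[n.+1 + n.+1]} -> Prop,
    (forall p, F p -> exists d, whomog (ww e) d p) ->
  exists G : {mpoly k[n.+1 + n.+1]} -> Prop,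
    (forall q, G q -> exists d1 d2, bihomog e d1 d2 q) /\
    forall a b : 'I_n.+1 -> k, nonzero a -> nonzero b ->
      ((exists x : 'I_(n.+1 + n.+1) -> k,
          [/\ inU x, ~ zeroset F x, wequiv e (fstc x) a & wequiv e (sndc x) b])
       <-> ~ zeroset G (catc a b)).
Proof.
move=> _ _ F hF.
exists (fun q => exists p, F p /\ exists d1 d2, q = comp e p d1 d2); split.
  by move=> q [p [_ [d1 [d2 ->]]]]; exists d1, d2; apply: comp_bihomog.
move=> a b [ja ha] [jb hb].
pose Dp (p : {mpoly k[n.+1 + n.+1]}) := (\max_(m <- msupp p) (bd1 e m + bd2 e m)%N).+1.
have hD p m : m \in msupp p -> (bd1 e m < Dp p)%N /\ (bd2 e m < Dp p)%N.
  move=> hm; have H := @leq_bigmax_seq _ (msupp p) xpredT (fun m => (bd1 e m + bd2 e m)%N) m hm isT.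
  by rewrite /Dp; split; rewrite ltnS; apply: leq_trans H; [apply: leq_addr | apply: leq_addl].
split.
  move=> [x [_ nF [t t0 ht] [s s0 hs]] nG]; apply: nF => p Fp.
  have hx : x =1 sc e t^-1 s^-1 (catc a b).
    move=> i; rewrite /sc /catc; case: (split_ordP i) => j -> ; rewrite ?splitL ?splitR.
      by rewrite ht exprVn mulKf // expf_neq0.
    by rewrite hs exprVn mulKf // expf_neq0.
  rewrite (meval_eq p hx) meval_sc (group _ _ _ _ _ _ _ _ (hD p)).
  apply: big1 => i _; apply: big1 => j _.
  rewrite -meval_comp nG ?mulr0 //; exists p; split => //; by exists (val i), (val j).
move=> nG.
have [q [[p [Fp [d1 [d2 ->]]]] nz]] : exists q, (exists p, F p /\ exists d1 d2, q = comp e p d1 d2)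
    /\ meval (catc a b) q != 0.
  apply: NNPP => H; apply: nG => q Gq; apply/eqP; apply: NNPP => nz; apply: H.
  by exists q; split => //; apply/negP.
have [d hd] := hF p Fp.
have hom m : m \in msupp p -> (bd1 e m + bd2 e m)%N = d.
  by move=> hm; rewrite -wdegE; apply/eqP; exact: (allP hd m hm).
pose g (i j : nat) := \sum_(m <- msupp p | (bd1 e m == i) && (bd2 e m == j)) p@_m * mon (catc a b) m.
have gnz i j : g i j != 0 -> exists m, [/\ m \in msupp p, bd1 e m = i & bd2 e m = j].
  move=> nzg; apply: NNPP => H; move: nzg; rewrite /g big1_seq ?eqxx //.
  move=> m /andP[/andP[/eqP h1 /eqP h2] hm]; exfalso; apply: H; by exists m.
rewrite meval_comp -/(g d1 d2) in nz.
have [m0 [hm0 h10 h20]] := gnz _ _ nz.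
have [lt1 lt2] := hD p m0 hm0; rewrite h10 h20 in lt1 lt2.
pose Q : {poly k} := \poly_(i < Dp p) \sum_(j < Dp p) g i j.
have Qd1 : Q`_d1 = g d1 d2.
  rewrite coef_poly lt1 (bigD1 (Ordinal lt2)) //= big1 ?addr0 //.
  move=> j hj; have [//|/gnz [m [hm h1 h2]]] := eqVneq (g d1 j) 0.
  exfalso; move: hj => /negP; apply; apply/eqP/val_inj => /=; have := hom m hm; have := hom m0 hm0; rewrite h1 h2 h10 h20.
  by move=> <- /eqP; rewrite eqn_add2l => /eqP.
have Q0 : Q != 0 by apply/eqP => Q0; move: nz; rewrite -Qd1 Q0 coef0 eqxx.
have [u ru] : exists u, root (Q * 'X + (-1)%:P) u.
  by apply/closed_rootP; rewrite size_MXaddC (negbTE Q0) /= eqSS size_poly_eq0.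
have hu : Q.[u] * u = 1.
  by move: ru; rewrite rootE hornerD hornerMX hornerC addr_eq0 opprK => /eqP.
have u0 : u != 0.
  by apply/eqP => u0; move: hu; rewrite u0 mulr0 => /eqP; rewrite eq_sym oner_eq0.
have Qu : Q.[u] != 0.
  by apply/eqP => Q0u; move: hu; rewrite Q0u mul0r => /eqP; rewrite eq_sym oner_eq0.
have eQ : Q.[u] = meval (sc e u 1 (catc a b)) p.
  rewrite meval_sc (group _ _ _ _ _ _ _ _ (hD p)) horner_poly; apply: eq_bigr => i _.
  rewrite mulr_suml; apply: eq_bigr => j _; by rewrite expr1n mulr1 mulrC.
exists (sc e u 1 (catc a b)); split.
- split.
    by exists ja; rewrite /fstc /sc /catc splitL mulf_neq0 // expf_neq0.
  by exists jb; rewrite /sndc /sc /catc splitR expr1n mul1r.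
- by move=> H; move: Qu; rewrite eQ H ?eqxx.
- exists u^-1; first by rewrite invr_eq0.
  by move=> i; rewrite /fstc /sc /catc splitL exprVn mulKf // expf_neq0.
- exists 1; first exact: oner_neq0.
  by move=> i; rewrite /sndc /sc /catc splitR !expr1n !mul1r.
Qed.
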